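(* Let $0\le r\le q^2$. If there exists a line spread $\mathcal F$ of $\mathrm{PG}(3,q)$ having exactly $r$ lines in common with the Desarguesian spread $\mathcal D$, then $\mathrm{PG}(3,q)$ admits a mixed partition of type $r$.
   Context: Let $q$ be a prime power, $F=\mathbb F_q$, $L=\mathbb F_{q^4}$, regarded as a 4-dimensional $F$-vector space; $\mathrm{PG}(3,q)$ has as points the one-dimensional subspaces $Fx$, $x\in L^*$, and as lines the two-dimensional $F$-subspaces (identified with their point sets). Let $C$ be the subfield of $L$ of order $q^2$ and $\mathcal D=\{Cx:x\in L^*\}$ the Desarguesian line spread. A line spread is a set of lines partitioning the point set. For $r\ge1$, a set $X$ of points of a projective space $\mathrm{PG}(V)$ over $F$ is the image of an $r$-uple embedding if there is an injective $F$-linear map $\phi:F^{r+1}\to V$ with $X=\{F\phi(t_0^r,t_0^{r-1}t_1,\dots,t_1^r):(t_0,t_1)\in F^2\setminus\{(0,0)\}\}$. A mixed partition of type $r$ of $\mathrm{PG}(3,q)$ ($0\le r\le q^2$) is a partition of its point set into $r$ lines and $q^2+1-r$ sets each of which is the image of a $3$-uple embedding (normal rational curves of order three, i.e. twisted cubics, when $q\ge3$). *)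

(* Defs.v *)
From Stdlib Require Lists.List.
From HB Require Import structures.
From mathcomp Require Import all_boot all_order all_algebra all_field.
Set Implicit Arguments. Unset Strict Implicit. Unset Printing Implicit Defensive.
Import GRing.Theory.
Local Open Scope ring_scope.

Section PG3.
Variables (F : finFieldType) (L : fieldExtType F).

(* points of PG(L) over F : one-dimensional F-subspaces *)
Definition is_point (P : {vspace L}) : bool := \dim P == 1%N.
Definition is_line (U : {vspace L}) : bool := \dim U == 2%N.

Definition pts_of (U : {vspace L}) : pred {vspace L} :=
  fun P => is_point P && (P <= U)%VS.

(* a finite family of point sets partitions the point set: every point lies
   in exactly one member (counted with multiplicity) *)
Definition partitions_points (parts : seq (pred {vspace L})) : Prop :=
  forall P : {vspace L}, is_point P -> count (fun X => X P) parts = 1%N.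

Definition line_spread (S : seq {vspace L}) : Prop :=
  all is_line S /\ partitions_points (map pts_of S).

(* the Desarguesian line spread {C x : x in L^*} *)
Definition in_desarg (C : {subfield L}) (U : {vspace L}) : Prop :=
  exists x : L, x != 0 /\ U = (C * <[x]>)%VS.

Definition nu3 (t0 t1 : F) : 'rV[F]_4 :=
  \row_(i < 4) (t0 ^+ (3 - i) * t1 ^+ i).

Definition is_3uple_image (X : pred {vspace L}) : Prop :=
  exists phi : 'rV[F]_4 -> L,
    [/\ linear phi, injective phi &
        forall P : {vspace L},
          X P = [exists t : F * F, (t != (0, 0)) && (P == <[phi (nu3 t.1 t.2)]>%VS)]].

Definition mixed_partition (r : nat) : Prop :=
  exists (ls : seq {vspace L}) (cs : seq (pred {vspace L})),
    [/\ size ls = r, all is_line ls,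
        size cs = ((#|F| ^ 2).+1 - r)%N,
        (forall X, Stdlib.Lists.List.In X cs -> is_3uple_image X) &
        partitions_points (map pts_of ls ++ cs)].

End PG3.

(* Main.v *)
Require Import Defs.
From HB Require Import structures.
From mathcomp Require Import all_boot all_order all_algebra all_field.
From mathcomp Require Import ring zify.
Set Implicit Arguments. Unset Strict Implicit. Unset Printing Implicit Defensive.
Import GRing.Theory.
Local Open Scope ring_scope.

Section Pts.
Variables (F : finFieldType) (L : fieldExtType F).
Implicit Types (P U V : {vspace L}) (x y z : L).

Lemma vlineZ (k : F) x : k != 0 -> (<[k *: x]> = <[x]>)%VS.
Proof.
move=> k0; apply/eqP; rewrite eqEdim -memvE memvZ ?memv_line //= !dim_vline.
by rewrite scaler_eq0 (negPf k0).
Qed.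

Lemma vline_mem x y : y != 0 -> y \in <[x]>%VS -> (<[y]> = <[x]>)%VS.
Proof.
move=> y0 /vlineP[k Dy]; move: y0; rewrite Dy scaler_eq0 negb_or => /andP[k0 _].
exact: vlineZ.
Qed.

Lemma point_vpick P : is_point P -> vpick P != 0 /\ P = <[vpick P]>%VS.
Proof.
move=> /eqP dP; have nz : vpick P != 0.
  by rewrite vpick0; apply/eqP => P0; move: dP; rewrite P0 dimv0.
split=> //; apply/eqP; rewrite eq_sym eqEdim -memvE memv_pick dP dim_vline nz //.
Qed.

Lemma is_point_line x : x != 0 -> is_point <[x]>%VS.
Proof. by move=> nz; rewrite /is_point dim_vline nz. Qed.

Definition ip P : {vspace L} := <[(vpick P)^-1]>%VS.

Lemma ip_line x : x != 0 -> ip <[x]>%VS = <[x^-1]>%VS.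
Proof.
move=> nz; have [nzp Dp] := point_vpick (is_point_line nz).
have /vlineP[k Dk] := memv_pick <[x]>%VS.
rewrite /ip Dk; move: nzp; rewrite Dk scaler_eq0 negb_or => /andP[k0 _].
rewrite -mulr_algl invfM; set t := (k%:A)^-1; have ->: t = (k^-1)%:A by rewrite /t -!in_algE fmorphV. rewrite mulr_algl vlineZ //.
by rewrite invr_eq0.
Qed.

Lemma ip_point P : is_point P -> is_point (ip P).
Proof.
by move=> /point_vpick[nz _]; rewrite /ip is_point_line // invr_eq0.
Qed.

Lemma ip_ip P : is_point P -> ip (ip P) = P.
Proof.
move=> /point_vpick[nz DP]; by rewrite [ip P]/ip ip_line ?invrK -?DP // invr_eq0.
Qed.

Lemma sub_point_mem P U : is_point P -> (P <= U)%VS = (vpick P \in U).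
Proof. by move=> /point_vpick[_ DP]; rewrite {1}DP memvE. Qed.


Lemma memv_coset (C : {subfield L}) x y :
  x != 0 -> (y \in (C * <[x]>)%VS) = (y / x \in C).
Proof.
move=> nz; apply/memv_cosetP/idP => [[c Cc ->]|Cy]; first by rewrite mulfK.
by exists (y / x); rewrite ?divfK.
Qed.

Lemma desarg_dim (C : {subfield L}) x : x != 0 -> \dim (C * <[x]>) = \dim C.
Proof. by move=> nz; rewrite dim_cosetv_unit // unitfE. Qed.

Lemma desarg_pts (C : {subfield L}) x P : x != 0 -> is_point P ->
  pts_of (C * <[x^-1]>) P = pts_of (C * <[x]>) (ip P).
Proof.
move=> nz pP; rewrite /pts_of pP ip_point //=.
have [nzy _] := point_vpick pP.
rewrite sub_point_mem // /ip -memvE !memv_coset ?invr_eq0 //.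
by rewrite invrK -invfM memvV.
Qed.

Lemma desarg_rep (C : {subfield L}) x z : x != 0 -> z != 0 ->
  z \in (C * <[x]>)%VS -> (C * <[z]> = C * <[x]>)%VS.
Proof.
move=> nx nz; rewrite memv_coset // => Czx.
apply/eqP; rewrite eqEdim !desarg_dim // leqnn andbT.
apply/subvP => y; rewrite !memv_coset // => Cyz.
have -> : y / x = (y / z) * (z / x) by rewrite mulrA divfK.
exact: rpredM.
Qed.

End Pts.
Section Cubic.
Variables (F : finFieldType) (L : fieldExtType F).
Variables (w p0 p1 p2 p3 : L).
Hypothesis Hrel : p0 + p1 * w + p2 * w ^+ 2 + p3 * w ^+ 3 + w ^+ 4 = 0.

Definition c1 := - (p3 + w).
Definition c2 := w ^+ 2 + p3 * w + p2.
Definition c3 := - (w ^+ 3 + p3 * w ^+ 2 + p2 * w + p1).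

Definition i0 : 'I_4 := @Ordinal 4 0 isT.
Definition i1 : 'I_4 := @Ordinal 4 1 isT.
Definition i2 : 'I_4 := @Ordinal 4 2 isT.
Definition i3 : 'I_4 := @Ordinal 4 3 isT.

Definition phi0 (v : 'rV[F]_4) : L :=
  (v 0 i0)%:A + (v 0 i1)%:A * c1 + (v 0 i2)%:A * c2 + (v 0 i3)%:A * c3.

Definition Nf (a b : F) : L :=
  a%:A ^+ 4 - p3 * a%:A ^+ 3 * b%:A + p2 * a%:A ^+ 2 * b%:A ^+ 2
  - p1 * a%:A * b%:A ^+ 3 + p0 * b%:A ^+ 4.

Lemma algM (x y : F) : (x * y)%:A = x%:A * y%:A :> L.
Proof. by rewrite mulr_algl scalerA. Qed.

Lemma algX (x : F) n : (x ^+ n)%:A = x%:A ^+ n :> L.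
Proof. by elim: n => [|n IH]; rewrite ?expr0 ?scale1r // !exprS algM IH. Qed.

Lemma phi0_nu3 (a b : F) : (a%:A + b%:A * w) * phi0 (nu3 a b) = Nf a b.
Proof.
rewrite /phi0 /nu3 !mxE /= ?subSS !subn0 !algM !algX.
set A := (a%:A : L); set B := (b%:A : L).
apply/eqP; rewrite -subr_eq0; apply/eqP.
transitivity (- (B ^+ 4 * (p0 + p1 * w + p2 * w ^+ 2 + p3 * w ^+ 3 + w ^+ 4))).
  by rewrite /Nf -/A -/B /c1 /c2 /c3; ring.
by rewrite Hrel mulr0 oppr0.
Qed.


Lemma algD (x y : F) : (x + y)%:A = x%:A + y%:A :> L.
Proof. by rewrite scalerDl. Qed.

Lemma phi0_linear : linear phi0.
Proof.
move=> k x y; rewrite -[k *: phi0 x]mulr_algl /phi0 !mxE !algD !algM.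
by rewrite /c1 /c2 /c3; ring.
Qed.

Hypothesis Hp0 : p0 \in (1%AS : {subfield L}).
Hypothesis Hp1 : p1 \in (1%AS : {subfield L}).
Hypothesis Hp2 : p2 \in (1%AS : {subfield L}).
Hypothesis Hp3 : p3 \in (1%AS : {subfield L}).
Hypothesis Hfree : forall d0 d1 d2 d3,
  d0 \in (1%AS : {subfield L}) -> d1 \in (1%AS : {subfield L}) ->
  d2 \in (1%AS : {subfield L}) -> d3 \in (1%AS : {subfield L}) ->
  d0 + d1 * w + d2 * w ^+ 2 + d3 * w ^+ 3 = 0 ->
  [/\ d0 = 0, d1 = 0, d2 = 0 & d3 = 0].

Lemma alg_in1 (k : F) : k%:A \in (1%AS : {subfield L}).
Proof. by rewrite rpredZ // mem1v. Qed.

Lemma alg_eq0 (k : F) : (k%:A == 0 :> L) = (k == 0).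
Proof. by rewrite scaler_eq0 oner_eq0 orbF. Qed.

Lemma phi0_eq0 v : phi0 v = 0 -> v = 0.
Proof.
move=> h.
set v0 := (v 0 i0)%:A : L; set v1 := (v 0 i1)%:A : L.
set v2 := (v 0 i2)%:A : L; set v3 := (v 0 i3)%:A : L.
have E : phi0 v = (v0 - v1 * p3 + v2 * p2 - v3 * p1) + (- v1 + v2 * p3 - v3 * p2) * w
    + (v2 - v3 * p3) * w ^+ 2 + (- v3) * w ^+ 3.
  by rewrite /phi0 -/v0 -/v1 -/v2 -/v3 /c1 /c2 /c3; ring.
have I0 := alg_in1 (v 0 i0); have I1 := alg_in1 (v 0 i1).
have I2 := alg_in1 (v 0 i2); have I3 := alg_in1 (v 0 i3).
rewrite h in E.
have [||||e0 e1 e2] := Hfree _ _ _ _ (esym E);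
  try by rewrite /v0 /v1 /v2 /v3 ?(rpredD, rpredN, rpredB, rpredM) ?alg_in1.
move=> /eqP; rewrite oppr_eq0 /v3 alg_eq0 => /eqP z3.
move: e2; rewrite -/v3 /v3 z3 scale0r mul0r subr0 => /eqP; rewrite alg_eq0 => /eqP z2.
move: e1; rewrite -/v2 /v2 z2 /v3 z3 !scale0r !mul0r !subr0 addr0 => /eqP.
rewrite oppr_eq0 alg_eq0 => /eqP z1.
move: e0; rewrite /v0 /v1 /v2 /v3 z1 z2 z3 !scale0r !mul0r !subr0 addr0 => /eqP.
rewrite alg_eq0 => /eqP z0.
apply/rowP => i; rewrite mxE; case: i => [[|[|[|[|m]]]] hi] //.
- by rewrite -z0; congr (v _ _); apply/val_inj.
- by rewrite -z1; congr (v _ _); apply/val_inj.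
- by rewrite -z2; congr (v _ _); apply/val_inj.
- by rewrite -z3; congr (v _ _); apply/val_inj.
Qed.


Lemma z_neq0 (a b : F) : (a, b) != (0, 0) -> a%:A + b%:A * w != 0.
Proof.
move=> nab; apply/eqP => z0.
have E : a%:A + b%:A * w + 0 * w ^+ 2 + 0 * w ^+ 3 = 0 by rewrite !mul0r !addr0.
have [||||e0 e1 _ _] := Hfree _ _ _ _ E; rewrite ?alg_in1 ?rpred0 //.
move: nab; move/eqP: e0; rewrite alg_eq0 => /eqP ->; move/eqP: e1.
by rewrite alg_eq0 => /eqP ->; rewrite eqxx.
Qed.

Lemma nu3_neq0 (a b : F) : (a, b) != (0, 0) -> nu3 a b != 0.
Proof.
move=> nab; apply/eqP => /rowP h; move: nab.
have := h i0; have := h i3; rewrite !mxE /= !expr0 mulr1 mul1r => /eqP.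
rewrite expf_eq0 /= => /eqP -> /eqP; rewrite expf_eq0 /= => /eqP ->.
by rewrite eqxx.
Qed.

Lemma Nf_in1 a b : Nf a b \in (1%AS : {subfield L}).
Proof. by rewrite /Nf ?(rpredD, rpredN, rpredB, rpredM, rpredX) ?alg_in1. Qed.

Lemma key (a b : F) : (a, b) != (0, 0) ->
  exists k : F, k != 0 /\ phi0 (nu3 a b) = k *: (a%:A + b%:A * w)^-1.
Proof.
move=> nab; have nz := z_neq0 nab.
have nphi : phi0 (nu3 a b) != 0.
  by apply/eqP => /phi0_eq0 /eqP; rewrite (negPf (nu3_neq0 nab)).
have := Nf_in1 a b; rewrite -(phi0_nu3 a b) => /vlineP[k Ek].
exists k; split.
  by apply: contraNneq nphi => k0; move: Ek; rewrite k0 scale0r => /eqP; rewrite mulf_eq0 (negPf nz) /=.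
by rewrite -[k *: _]mulr_algl -Ek mulrC mulKf.
Qed.


Variable u : L.
Hypothesis nu : u != 0.

Definition phi (v : 'rV[F]_4) : L := u^-1 * phi0 v.

Lemma phi_linear : linear phi.
Proof. by move=> k x y; rewrite /phi phi0_linear mulrDr scalerAr. Qed.

Lemma phi_inj : injective phi.
Proof.
move=> x y /(congr1 (fun z => u * z)); rewrite /phi !mulVKf // => e.
apply/eqP; rewrite -subr_eq0; apply/eqP; apply: phi0_eq0.
have -> : x - y = (-1) *: y + x by rewrite scaleN1r addrC.
by rewrite phi0_linear e scaleN1r addNr.
Qed.

Lemma phi_image P :
  (is_point P && pts_of (<[u]> + <[w * u]>)%VS (ip P)) =
  [exists t : F * F, (t != (0, 0)) && (P == <[phi (nu3 t.1 t.2)]>%VS)].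
Proof.
apply/idP/existsP.
- case/andP => pP /andP[_ sub].
  have [ny DP] := point_vpick pP; move: ny DP sub; set y := vpick P => ny DP.
  rewrite /ip -/y -memvE => /memv_addP[y1 /vlineP[a ->] [y2 /vlineP[b ->] Ey]].
  have Ez : y^-1 = (a%:A + b%:A * w) * u.
    by rewrite Ey -[a *: u]mulr_algl -[b *: _]mulr_algl; ring.
  have nab : (a, b) != (0, 0).
    apply: contra ny => /eqP [a0 b0]; move: Ez.
    by rewrite a0 b0 scale0r mul0r add0r mul0r => /eqP; rewrite invr_eq0.
  exists (a, b); rewrite nab /=; have [k [k0 Ek]] := key nab.
  rewrite /phi Ek DP -scalerAr -invfM mulrC -Ez invrK vlineZ //.
- case => [[a b]] /andP[nab /eqP ->] /=.
  have [k [k0 Ek]] := key nab; have nz := z_neq0 nab.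
  rewrite /phi Ek -scalerAr -invfM vlineZ //.
  have nzu : u * (a%:A + b%:A * w) != 0 by rewrite mulf_neq0.
  rewrite is_point_line ?invr_eq0 //= /pts_of ip_line ?invr_eq0 // invrK.
  rewrite is_point_line //= -memvE; apply/memv_addP.
  exists (a *: u); first exact: memvZ (memv_line u).
  exists (b *: (w * u)); first exact: memvZ (memv_line _).
  by rewrite -[a *: u]mulr_algl -[b *: _]mulr_algl; ring.
Qed.

End Cubic.

Section Main.
Variables (F : finFieldType) (L : fieldExtType F).
Variables (C : {subfield L}).
Hypotheses (hL : \dim {:L} = 4%N) (hC : \dim C = 2%N).
Implicit Types (U P : {vspace L}) (w x y : L).

Lemma line_basis U : is_line U -> exists u v, u != 0 /\ U = (<[u]> + <[v]>)%VS.
Proof.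
move=> /eqP lU; have bU := vbasisP U; have fr := basis_free bU.
have sp := span_basis bU.
have sz : size (vbasis U : seq L) = 2 by rewrite size_tuple.
move: fr sp sz; case: (vbasis U : seq L) => [|a [|b [|]]] //= fr sp _.
exists a, b; split; first by apply: (free_not0 fr); rewrite inE eqxx.
by rewrite -sp span_def !big_cons big_nil addv0.
Qed.

Lemma deg4 w : w \notin C -> adjoin_degree 1%AS w = 4%N.
Proof.
move=> nC; set n := adjoin_degree _ w.
have dK : \dim <<1%AS; w>>%AS = n by rewrite dim_Fadjoin dimv1 muln1.
have dv : (n %| 4)%N by rewrite -hL -dK; apply: field_dimS; exact: subvf.
have n1 : n != 1%N.
  by rewrite adjoin_deg_eq1; apply: contra nC => /(subvP (sub1v C)).
have n2 : n != 2%N.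
  apply: contra nC => /eqP n2; rewrite (Fermat's_little_theorem C) hC.
  have := Fermat's_little_theorem <<1%AS; w>>%AS w.
  by rewrite memv_adjoin /= dK n2 => <-.
move: (n) dv n1 n2 => m dv; have := dvdn_leq (isT : (0 < 4)%N) dv.
by case: m dv => [|[|[|[|[|m]]]]].
Qed.


Lemma minpoly_rel w : w \notin C ->
  let mp := minPoly 1%AS w in
  mp`_0 + mp`_1 * w + mp`_2 * w ^+ 2 + mp`_3 * w ^+ 3 + w ^+ 4 = 0.
Proof.
move=> nC mp; have l4 : mp`_4 = 1.
  by have := monicP (monic_minPoly 1%VS w); rewrite lead_coefE size_minPoly deg4.
have := minPolyxx 1%AS w; rewrite horner_coef size_minPoly deg4 //.
rewrite !big_ord_recr big_ord0 /= add0r -/mp l4 expr0 mulr1 expr1 mul1r.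
by [].
Qed.

Lemma minpoly_free w : w \notin C -> forall d0 d1 d2 d3,
  d0 \in (1%AS : {subfield L}) -> d1 \in (1%AS : {subfield L}) ->
  d2 \in (1%AS : {subfield L}) -> d3 \in (1%AS : {subfield L}) ->
  d0 + d1 * w + d2 * w ^+ 2 + d3 * w ^+ 3 = 0 ->
  [/\ d0 = 0, d1 = 0, d2 = 0 & d3 = 0].
Proof.
move=> nC d0 d1 d2 d3 h0 h1 h2 h3 E.
pose p := \poly_(i < 4) [:: d0; d1; d2; d3]`_i.
have cp i : p`_i = [:: d0; d1; d2; d3]`_i.
  by rewrite coef_poly; case: ltnP => // hi; rewrite nth_default.
suff p0 : p = 0.
  by split; [move: (cp 0%N) | move: (cp 1%N) | move: (cp 2%N) | move: (cp 3%N)];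
    rewrite p0 coef0.
apply/eqP; apply: contraT => np.
have po : p \is a polyOver (1%AS : {subfield L}).
  apply/polyOverP => i; rewrite cp.
  by case: i => [|[|[|[|i]]]] //=; rewrite nth_nil rpred0.
have rt : root p w.
  rewrite /root horner_poly !big_ord_recr big_ord0 /= add0r expr0 mulr1 expr1.
  by rewrite E.
have := dvdp_leq np (minPoly_dvdp po rt); rewrite size_minPoly deg4 //.
by move=> /leq_trans /(_ (size_poly _ _)).
Qed.


Lemma nondesarg_cubic U : is_line U -> ~ in_desarg C U ->
  is_3uple_image (fun P => is_point P && pts_of U (ip P)).
Proof.
move=> lU nd; have [u [v [nu DU]]] := line_basis lU.
set w := v / u; have Dv : v = w * u by rewrite /w divfK.
have nC : w \notin C.
  apply/negP => Cw; apply: nd; exists u; split => //.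
  apply/eqP; rewrite eqEdim desarg_dim // hC -(eqP lU) leqnn andbT DU subv_add.
  by rewrite -!memvE !memv_coset // divff // mem1v.
pose mp := minPoly 1%AS w.
have hp i : mp`_i \in (1%AS : {subfield L}) by apply/polyOverP/minPolyOver.
have Hrel := minpoly_rel nC.
have Hfree := minpoly_free nC.
exists (phi w mp`_1 mp`_2 mp`_3 u); split.
- exact: phi_linear.
- exact: (phi_inj (hp 1%N) (hp 2%N) (hp 3%N) Hfree nu).
- by move=> P; rewrite DU Dv; apply: (phi_image Hrel (hp 0%N) (hp 1%N) (hp 2%N) (hp 3%N) Hfree nu).
Qed.

End Main.
Section Count.
Variables (F : finFieldType) (L : fieldExtType F).
Hypothesis hL : \dim {:L} = 4%N.
Local Notation FT := (finvect_type L).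

Lemma cardU (U : {vspace L}) : #|[pred x : FT | x \in U]| = (#|F| ^ \dim U)%N.
Proof. rewrite -(card_vspace (U : {vspace FT})); exact: eq_card. Qed.

Lemma cardU0 (U : {vspace L}) :
  #|[pred x : FT | (x != 0) && (x \in U)]| = (#|F| ^ \dim U - 1)%N.
Proof.
rewrite -cardU [in RHS](cardD1 (0 : FT)) !inE mem0v /= add1n subSS subn0.
by apply: eq_card => x; rewrite !inE.
Qed.

Lemma nat_pow_rel (q s : nat) : (1 < q)%N -> (q ^ 4 - 1 = s * (q ^ 2 - 1))%N ->
  s = (q ^ 2).+1.
Proof. move=> h1 h2; nia. Qed.

Lemma spread_size (S : seq {vspace L}) : line_spread S -> size S = (#|F| ^ 2).+1.
Proof.
case=> /allP lS pS; apply: nat_pow_rel; first exact: finNzRing_gt1.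
have cnt (x : L) : x != 0 -> count (fun U : {vspace L} => x \in U) S = 1%N.
  move=> nx; have := pS _ (is_point_line nx); rewrite count_map.
  move <-; apply: eq_count => U; rewrite /= /pts_of. have -> : is_point <[x]>%VS by apply: is_point_line. by [].
have E1 : (\sum_(x : FT | x != 0%R) \sum_(U <- S) (if (x : L) \in U then 1 else 0))%N
    = (#|F| ^ 4 - 1)%N.
  transitivity (\sum_(x : FT | x != 0%R) 1)%N.
    apply: eq_bigr => x nx; rewrite -[RHS](cnt x nx) -sum1_count [RHS]big_mkcond /=.
    by [].
  rewrite sum1_card -hL -cardU0.
  by apply: eq_card => x; rewrite !inE memvf andbT.
rewrite -E1 exchange_big /=.
transitivity (\sum_(U <- S) (#|F| ^ 2 - 1))%N; last first.
  by rewrite big_const_seq count_predT iter_addn_0 mulnC.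
apply: eq_big_seq => U /lS /eqP dU.
by rewrite -big_mkcondr /= sum1_card -dU -cardU0.
Qed.

Lemma spread_uniq (S : seq {vspace L}) : line_spread S -> uniq S.
Proof.
case=> lS pS.
have {pS} : forall P : {vspace L}, is_point P -> (count (fun X => X P) (map (@pts_of _ L) S) <= 1)%N.
  by move=> P /pS ->.
elim: S lS => //= U s IH /andP[lU ls] h; apply/andP; split; last first.
  by apply: IH => // P /h; apply: leq_trans; apply: leq_addl.
apply/negP => Us.
have nU : vpick U != 0.
  rewrite vpick0; apply/eqP => U0; move: lU; rewrite /is_line U0 dimv0.
  by [].
have pP := is_point_line nU.
have := h _ pP; rewrite count_map /= /pts_of pP -memvE memv_pick /=.
rewrite add1n ltnS leqn0; apply/negP; rewrite -lt0n -has_count; apply/hasP; exists U => //=.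
by rewrite pP -memvE memv_pick.
Qed.

End Count.

Section Assemble.
Variables (F : finFieldType) (L : fieldExtType F).

Lemma desarg_vpick (C : {subfield L}) (U : {vspace L}) : \dim C = 2%N ->
  in_desarg C U -> vpick U != 0 /\ U = (C * <[vpick U]>)%VS.
Proof.
move=> hC [x [nx ->]].
have nz : vpick (C * <[x]>)%VS != 0.
  rewrite vpick0; apply/eqP => E; have := desarg_dim C nx; rewrite E dimv0 hC.
  by [].
by split => //; rewrite (desarg_rep nx nz) // memv_pick.
Qed.

Lemma count_split (T : Type) (a b : pred T) (s : seq T) :
  count a s = (count (predI a b) s + count (predI a (predC b)) s)%N.
Proof.
elim: s => //= y s ->; case: (a y); case: (b y) => /=; rewrite ?addnS ?addSn //.
Qed.

Lemma In_map_cubic (Q : pred {vspace L} -> Prop) (f : {vspace L} -> pred {vspace L})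
  (s : seq {vspace L}) :
  (forall U, U \in s -> Q (f U)) -> forall X, List.In X (map f s) -> Q X.
Proof.
elim: s => //= a s IH h X [<-|]; first by apply: h; rewrite inE eqxx.
by apply: IH => U Us; apply: h; rewrite inE Us orbT.
Qed.

End Assemble.

Unset Implicit Arguments.

Theorem mainTheorem6 (F : finFieldType) (L : fieldExtType F)
    (hL : \dim {:L} = 4%N) (C : {subfield L}) (hC : \dim C = 2%N)
    (r : nat) (hr : (r <= #|F| ^ 2)%N) :
  (exists S : seq {vspace L},
      line_spread S /\
      (* T enumerates, without repetition, the lines of S lying in D *)
      exists T : seq {vspace L},
        [/\ uniq T, size T = r &
            forall U, U \in T <-> (U \in S /\ in_desarg C U)]) ->
  mixed_partition L r.
Proof.
move=> [S [spS [T [uT sT HT]]]].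
have uS := spread_uniq spS; have szS := spread_size hL spS.
have [/allP lS pS] := spS.
pose Xof (U : {vspace L}) := fun P : {vspace L} => is_point P && pts_of U (ip P).
pose g (U : {vspace L}) := (C * <[(vpick U)^-1]>)%VS.
pose S2 := filter (fun U => U \notin T) S.
have TS U : U \in T -> U \in S by move/HT => [].
have sTS : size (filter (mem T) S) = size T.
  apply: perm_size; apply: uniq_perm; rewrite ?filter_uniq // => U.
  by rewrite mem_filter; apply/andP/idP => [[]//|UT]; split=> //; apply: TS.
exists (map g T), (map Xof S2); split.
- by rewrite size_map.
- apply/allP => _ /mapP[U UT ->]; have [nz _] := desarg_vpick hC (proj2 (proj1 (HT U) UT)).
  by rewrite /is_line /g desarg_dim ?invr_eq0 // hC.
  rewrite size_map size_filter -sT -sTS size_filter -szS.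
  rewrite -(count_predC (mem T) S) addKn; apply: eq_count => U; by [].
- apply: In_map_cubic => U; rewrite mem_filter => /andP[nT US].
  apply: (nondesarg_cubic hL hC); first exact: lS.
  by move=> dU; move: nT; have [_ ->] := HT U.
- move=> P pP; rewrite count_cat !count_map.
  rewrite (eq_in_count (a2 := fun U => Xof U P) (s := T)); last first.
    move=> U UT; have [nz DU] := desarg_vpick hC (proj2 (proj1 (HT U) UT)).
    by rewrite /= /g desarg_pts // -DU /Xof pP.
  have pe : perm_eq (filter (mem T) S) T.
    apply: uniq_perm; rewrite ?filter_uniq // => U.
    by rewrite mem_filter; apply/andP/idP => [[]//|UT]; split=> //; apply: TS.
  rewrite -(permP pe).
  rewrite count_filter /S2 count_filter -count_split.
  have := pS _ (ip_point pP); rewrite count_map => <-.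
  by apply: eq_count => U; rewrite /= /Xof pP.
Qed.
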